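(* Let $\langle X,d\rangle$ be a metric space. The following conditions are equivalent: (1) $X$ is cofinally Bourbaki quasi-complete; (2) $X$ is strongly uniformly locally bounded and, for every nowhere-vanishing real-valued strongly uniformly locally Lipschitz function $f$ on $X$, the reciprocal $1/f$ is strongly uniformly locally Lipschitz; (3) $X$ is strongly uniformly locally bounded and, for every nowhere-vanishing real-valued Lipschitz function $f$ on $X$, the reciprocal $1/f$ is strongly uniformly locally Lipschitz.
   Context: For $\varepsilon>0$, an $\varepsilon$-chain joining $x,y\in X$ is a finite sequence $x=x_0,\dots,x_n=y$ with $d(x_{i-1},x_i)<\varepsilon$. $S^\infty_d(x,\varepsilon)$ denotes the set of points of $X$ joinable to $x$ by an $\varepsilon$-chain. A sequence $\langle x_n\rangle$ is cofinally Bourbaki quasi-Cauchy if for every $\varepsilon>0$ there is an infinite $N_\varepsilon\subseteq\mathbb{N}$ such that any $x_j,x_k$ with $j,k\in N_\varepsilon$ can be joined by an $\varepsilon$-chain; $X$ is cofinally Bourbaki quasi-complete if every such sequence has a cluster point. $X$ is strongly uniformly locally bounded if there is $\delta>0$ such that $S^\infty_d(x,\delta)$ is bounded for all $x\in X$. A function $f:X\to\mathbb{R}$ is strongly uniformly locally Lipschitz (uniformly locally chain-Lipschitz) if there is $\delta>0$ such that for each $x\in X$ the restriction of $f$ to $S^\infty_d(x,\delta)$ is Lipschitz (constant may depend on $x$). *)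

(* Defs.v *)
From Stdlib Require Import Reals.
Open Scope R_scope.

Definition is_metric {X : Type} (d : X -> X -> R) : Prop :=
  (forall x y, 0 <= d x y) /\
  (forall x y, d x y = 0 <-> x = y) /\
  (forall x y, d x y = d y x) /\
  (forall x y z, d x z <= d x y + d y z).

Definition eps_chain {X : Type} (d : X -> X -> R) (eps : R) (x y : X) : Prop :=
  exists (n : nat) (s : nat -> X),
    s 0%nat = x /\ s n = y /\ (forall i, (i < n)%nat -> d (s i) (s (S i)) < eps).

Definition S_inf {X : Type} (d : X -> X -> R) (x : X) (eps : R) : X -> Prop :=
  fun y => eps_chain d eps x y.

Definition infinite_nat (N : nat -> Prop) : Prop :=
  forall m : nat, exists n : nat, (m <= n)%nat /\ N n.

Definition cofinally_BQC {X : Type} (d : X -> X -> R) (x : nat -> X) : Prop :=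
  forall eps, 0 < eps ->
    exists N : nat -> Prop, infinite_nat N /\
      forall j k, N j -> N k -> eps_chain d eps (x j) (x k).

Definition cluster_point {X : Type} (d : X -> X -> R) (x : nat -> X) (p : X) : Prop :=
  forall eps, 0 < eps -> forall m : nat, exists n : nat, (m <= n)%nat /\ d (x n) p < eps.

Definition cofinally_Bourbaki_quasi_complete {X : Type} (d : X -> X -> R) : Prop :=
  forall x : nat -> X, cofinally_BQC d x -> exists p, cluster_point d x p.

Definition bounded_set {X : Type} (d : X -> X -> R) (A : X -> Prop) : Prop :=
  exists r : R, forall y z, A y -> A z -> d y z <= r.

Definition strongly_uniformly_locally_bounded {X : Type} (d : X -> X -> R) : Prop :=
  exists delta, 0 < delta /\ forall x, bounded_set d (S_inf d x delta).

Definition lipschitz_on {X : Type} (d : X -> X -> R) (A : X -> Prop) (f : X -> R) : Prop :=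
  exists K : R, 0 <= K /\ forall y z, A y -> A z -> Rabs (f y - f z) <= K * d y z.

Definition lipschitz {X : Type} (d : X -> X -> R) (f : X -> R) : Prop :=
  lipschitz_on d (fun _ => True) f.

Definition strongly_uniformly_locally_lipschitz {X : Type} (d : X -> X -> R) (f : X -> R) : Prop :=
  exists delta, 0 < delta /\ forall x, lipschitz_on d (S_inf d x delta) f.

(* Main.v *)
Require Import Defs.
From Stdlib Require Import Reals Lra Lia ZArith ClassicalEpsilon Classical.
Open Scope R_scope.

Lemma arch (r : R) : exists n : nat, r < INR n.
Proof.
  destruct (archimed r) as [H1 _].
  destruct (Z_lt_le_dec (up r) 0) as [Hz|Hz].
  - exists 0%nat. simpl. apply IZR_lt in Hz. lra.
  - exists (Z.to_nat (up r)). rewrite INR_IZR_INZ, Z2Nat.id by lia. lra.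
Qed.

Lemma inv_pos_nat (n : nat) : 0 < / INR (S n).
Proof. apply Rinv_0_lt_compat, lt_0_INR; lia. Qed.

Lemma inv_nat_mono (m n : nat) : (m <= n)%nat -> / INR (S n) <= / INR (S m).
Proof. intro; apply Rinv_le_contravar; [apply lt_0_INR; lia | apply le_INR; lia]. Qed.

Lemma arch_inv (e : R) : 0 < e -> exists k : nat, / INR (S k) <= e.
Proof.
  intro He. destruct (arch (/ e)) as [k Hk]. exists k.
  rewrite <- (Rinv_inv e). apply Rinv_le_contravar. apply Rinv_0_lt_compat; lra.
  rewrite S_INR; lra.
Qed.

Section Chains.
Context {X : Type} (d : X -> X -> R) (Hd : is_metric d).

Lemma chain_refl e x : eps_chain d e x x.
Proof. exists 0%nat, (fun _ => x). repeat split; intros; lia. Qed.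

Lemma chain_step e x y : d x y < e -> eps_chain d e x y.
Proof.
  intro H. exists 1%nat, (fun i => match i with 0%nat => x | _ => y end).
  repeat split. intros i Hi. assert (i = 0%nat) by lia. subst. exact H.
Qed.

Lemma chain_mono e1 e2 x y : e1 <= e2 -> eps_chain d e1 x y -> eps_chain d e2 x y.
Proof.
  intros He [n [s [H0 [Hn Hs]]]]. exists n, s. repeat split; auto.
  intros i Hi. specialize (Hs i Hi). lra.
Qed.

Lemma chain_sym e x y : eps_chain d e x y -> eps_chain d e y x.
Proof.
  destruct Hd as [_ [_ [Hsym _]]].
  intros [n [s [H0 [Hn Hs]]]]. exists n, (fun i => s (n - i)%nat).
  repeat split.
  - rewrite Nat.sub_0_r. auto.
  - rewrite Nat.sub_diag. auto.
  - intros i Hi. replace (n - i)%nat with (S (n - S i)) by lia.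
    rewrite Hsym. apply Hs. lia.
Qed.

Lemma chain_trans e x y z : eps_chain d e x y -> eps_chain d e y z -> eps_chain d e x z.
Proof.
  intros [n1 [s1 [H10 [H1n H1s]]]] [n2 [s2 [H20 [H2n H2s]]]].
  exists (n1 + n2)%nat, (fun i => if Nat.leb i n1 then s1 i else s2 (i - n1)%nat).
  repeat split.
  - simpl. auto.
  - destruct (Nat.leb_spec (n1 + n2) n1).
    + assert (E : n2 = 0%nat) by lia. rewrite E, Nat.add_0_r, H1n, <- H2n, E, H20; reflexivity.
    + rewrite <- H2n. f_equal. lia.
  - intros i Hi.
    destruct (Nat.leb_spec i n1); destruct (Nat.leb_spec (S i) n1).
    + apply H1s. lia.
    + assert (E : i = n1) by lia. rewrite E, H1n, <- H20.
      replace (S n1 - n1)%nat with 1%nat by lia. apply H2s. lia.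
    + lia.
    + replace (S i - n1)%nat with (S (i - n1)) by lia. apply H2s. lia.
Qed.

End Chains.

Definition kf (n : nat) : nat := (n - Nat.sqrt n * Nat.sqrt n)%nat.

Lemma kf_inf (k m : nat) : exists n, (m <= n)%nat /\ kf n = k.
Proof.
  exists ((m + k) * (m + k) + k)%nat. split; [nia|].
  unfold kf. rewrite (Nat.sqrt_unique _ (m + k)).
  - lia.
  - split; simpl; nia.
Qed.

Lemma build {X : Type} (d : X -> X -> R) (Hd : is_metric d) (P : nat -> X -> Prop) :
  cofinally_Bourbaki_quasi_complete d ->
  (forall k, exists z, forall n, exists y, S_inf d z (/ INR (S k)) y /\ P n y) ->
  exists (y : nat -> X) p, (forall n, P n (y n)) /\ cluster_point d y p.
Proof.
  intros Hc H.
  destruct (choice _ H) as [z Hz].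
  destruct (choice (fun n y => S_inf d (z (kf n)) (/ INR (S (kf n))) y /\ P n y)
              (fun n => Hz (kf n) n)) as [y Hy].
  exists y.
  destruct (Hc y) as [p Hp].
  - intros e He. destruct (arch_inv e He) as [k Hk].
    exists (fun n => kf n = k). split.
    + intro m. destruct (kf_inf k m) as [n [Hn1 Hn2]]. eauto.
    + intros j l Hj Hl. destruct (Hy j) as [Hj1 _]. destruct (Hy l) as [Hl1 _].
      rewrite Hj in Hj1. rewrite Hl in Hl1. unfold S_inf in *.
      apply (chain_mono d (/ INR (S k)) e); auto.
      apply (chain_trans d (/ INR (S k)) _ (z k)); auto.
      apply chain_sym; auto.
  - exists p. split; auto. intro n. apply Hy.
Qed.

Lemma partA {X : Type} (d : X -> X -> R) (Hd : is_metric d) :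
  cofinally_Bourbaki_quasi_complete d -> strongly_uniformly_locally_bounded d.
Proof.
  intro Hc. pose proof Hd as [Hnn [H0 [Hsym Htri]]].
  apply NNPP. intro Hn.
  assert (Hw : exists w : X, True).
  { apply NNPP. intro Hw. apply Hn. exists 1. split; [lra|].
    intro x. exfalso. apply Hw. exists x. auto. }
  destruct Hw as [w _].
  destruct (build d Hd (fun n y => d y w > INR n) Hc) as [y [p [Hy Hp]]].
  - intro k. apply NNPP. intro Hk. apply Hn. exists (/ INR (S k)). split.
    { apply inv_pos_nat. }
    intro z. apply NNPP. intro Hb. apply Hk. exists z. intro n.
    apply NNPP. intro Hy. apply Hb. exists (2 * INR n).
    intros y1 y2 H1 H2.
    assert (A1 : d y1 w <= INR n).
    { apply Rnot_lt_le. intro. apply Hy. exists y1. split; auto. }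
    assert (A2 : d y2 w <= INR n).
    { apply Rnot_lt_le. intro. apply Hy. exists y2. split; auto. }
    specialize (Htri y1 w y2). rewrite (Hsym w y2) in Htri. lra.
  - destruct (arch (d p w + 1)) as [m Hm].
    destruct (Hp 1 ltac:(lra) m) as [n [Hmn Hn1]].
    specialize (Hy n). apply le_INR in Hmn.
    specialize (Htri (y n) p w). lra.
Qed.

Lemma partC {X : Type} (d : X -> X -> R) (f : X -> R) :
  lipschitz d f -> strongly_uniformly_locally_lipschitz d f.
Proof.
  intros [K [HK HL]]. exists 1. split; [lra|]. intro x. exists K. split; auto.
Qed.

Lemma partB {X : Type} (d : X -> X -> R) (Hd : is_metric d) :
  cofinally_Bourbaki_quasi_complete d ->
  forall f : X -> R, (forall x, f x <> 0) ->
    strongly_uniformly_locally_lipschitz d f ->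
    strongly_uniformly_locally_lipschitz d (fun x => / f x).
Proof.
  intros Hc f Hf0 [df [Hdf Hf]].
  pose proof Hd as [Hnn [H0 [Hsym Htri]]].
  assert (Hcl : exists d0, 0 < d0 /\ forall x, exists c, 0 < c /\
                  forall y, S_inf d x d0 y -> c <= Rabs (f y)).
  { apply NNPP. intro Hn.
    destruct (build d Hd (fun n y => Rabs (f y) < / INR (S n)) Hc) as [y [p [Hy Hp]]].
    - intro k. apply NNPP. intro Hk. apply Hn. exists (/ INR (S k)). split.
      { apply inv_pos_nat. }
      intro z. apply NNPP. intro Hb. apply Hk. exists z. intro n.
      apply NNPP. intro Hy. apply Hb. exists (/ INR (S n)). split; [apply inv_pos_nat|].
      intros y1 H1. apply Rnot_lt_le. intro. apply Hy. exists y1. split; auto.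
    - set (a := Rabs (f p)).
      assert (Ha : 0 < a) by (apply Rabs_pos_lt; auto).
      destruct (Hf p) as [K [HK HL]].
      set (t := a / (2 * (K + 1))).
      assert (Ht : t * (2 * (K + 1)) = a) by (unfold t; field; lra).
      assert (Ht0 : 0 < t) by (unfold t; apply Rdiv_lt_0_compat; lra).
      destruct (arch_inv (a / 2) ltac:(lra)) as [m0 Hm0].
      set (m := S m0).
      destruct (Hp (Rmin df t) ltac:(apply Rmin_pos; lra) m) as [n [Hmn Hn1]].
      assert (Hin : S_inf d p df (y n)).
      { apply chain_step. rewrite Hsym. pose proof (Rmin_l df t). lra. }
      specialize (HL (y n) p Hin (chain_refl d df p)).
      pose proof (Rmin_r df t) as Hr.
      assert (Kd : K * d (y n) p <= K * t) by (apply Rmult_le_compat_l; lra).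
      assert (Kt : K * t < a / 2) by nra.
      pose proof (Rabs_triang_inv (f p) (f (y n))) as Tr.
      rewrite Rabs_minus_sym in Tr.
      specialize (Hy n).
      assert (Hmn' : (m0 <= n)%nat) by (unfold m in Hmn; lia).
      pose proof (inv_nat_mono m0 n Hmn').
      fold a in Tr. lra. }
  destruct Hcl as [d0 [Hd0 Hc0]].
  exists (Rmin df d0). split; [apply Rmin_pos; lra|].
  intro x. destruct (Hf x) as [K [HK HL]]. destruct (Hc0 x) as [c [Hc1 Hc2]].
  exists (K / (c * c)). split.
  { apply Rmult_le_pos; [lra|]. left. apply Rinv_0_lt_compat. nra. }
  intros y z Hy Hz.
  assert (Hy1 : S_inf d x df y) by (eapply chain_mono; [apply Rmin_l| exact Hy]).
  assert (Hz1 : S_inf d x df z) by (eapply chain_mono; [apply Rmin_l| exact Hz]).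
  assert (Hy2 : S_inf d x d0 y) by (eapply chain_mono; [apply Rmin_r| exact Hy]).
  assert (Hz2 : S_inf d x d0 z) by (eapply chain_mono; [apply Rmin_r| exact Hz]).
  specialize (HL y z Hy1 Hz1).
  pose proof (Hc2 y Hy2) as Cy. pose proof (Hc2 z Hz2) as Cz.
  pose proof (Hf0 y). pose proof (Hf0 z).
  replace (/ f y - / f z) with ((f z - f y) * / (f y * f z)) by (field; auto).
  rewrite Rabs_mult, Rabs_inv, Rabs_mult, Rabs_minus_sym.
  replace (K / (c * c) * d y z) with ((K * d y z) * / (c * c)) by (field; lra).
  apply Rmult_le_compat; auto.
  - apply Rabs_pos.
  - left. apply Rinv_0_lt_compat. apply Rmult_lt_0_compat; apply Rabs_pos_lt; auto.
  - apply Rinv_le_contravar. nra. apply Rmult_le_compat; lra.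
Qed.

Lemma partD {X : Type} (d : X -> X -> R) (Hd : is_metric d) :
  strongly_uniformly_locally_bounded d ->
  (forall f : X -> R, (forall x, f x <> 0) -> lipschitz d f ->
        strongly_uniformly_locally_lipschitz d (fun x => / f x)) ->
  cofinally_Bourbaki_quasi_complete d.
Proof.
  intros [db [Hdb Hb]] H3 xs Hcb.
  pose proof Hd as [Hnn [H0 [Hsym Htri]]].
  apply NNPP. intro Hncl.
  set (E := fun x r => exists n, r = - (d x (xs n) + / INR (S n))).
  assert (bnd : forall x, bound (E x)).
  { intro x. exists 0. intros r [n Hn]. rewrite Hn.
    pose proof (Hnn x (xs n)). pose proof (inv_pos_nat n). lra. }
  assert (ne : forall x, exists r, E x r).
  { intro x. exists (- (d x (xs 0%nat) + / INR (S 0))). exists 0%nat. auto. }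
  set (g := fun x => proj1_sig (completeness (E x) (bnd x) (ne x))).
  assert (Hg : forall x, is_lub (E x) (g x)).
  { intro x. unfold g. exact (proj2_sig (completeness (E x) (bnd x) (ne x))). }
  set (f := fun x => - g x).
  assert (F1 : forall x n, f x <= d x (xs n) + / INR (S n)).
  { intros x n. destruct (Hg x) as [Hu _]. unfold f.
    assert (E x (- (d x (xs n) + / INR (S n)))) by (exists n; auto).
    specialize (Hu _ H). lra. }
  assert (F2 : forall x c, (forall n, c <= d x (xs n) + / INR (S n)) -> c <= f x).
  { intros x c Hc. destruct (Hg x) as [_ Hl]. unfold f.
    assert (g x <= - c).
    { apply Hl. intros r [n Hn]. rewrite Hn. specialize (Hc n). lra. }
    lra. }
  assert (F0 : forall x, 0 <= f x).
  { intro x. apply F2. intro n. pose proof (Hnn x (xs n)). pose proof (inv_pos_nat n). lra. }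
  assert (FL : forall x y, f x <= f y + d x y).
  { intros x y. cut (f x - d x y <= f y); [lra|]. apply F2. intro n.
    specialize (F1 x n). specialize (Htri x y (xs n)). lra. }
  assert (Fpos : forall x, 0 < f x).
  { intro x. destruct (F0 x) as [Hx|Hx]; auto. exfalso. apply Hncl. exists x.
    intros e He m.
    apply NNPP. intro Hno.
    assert (f x >= Rmin e (/ INR (S m))).
    { apply Rle_ge. apply F2. intro n.
      destruct (le_lt_dec m n) as [Hmn|Hmn].
      - assert (d (xs n) x >= e).
        { apply Rnot_lt_ge. intro. apply Hno. exists n. auto. }
        rewrite Hsym. pose proof (Rmin_l e (/ INR (S m))). pose proof (inv_pos_nat n). lra.
      - pose proof (inv_nat_mono n m ltac:(lia)).
        pose proof (Rmin_r e (/ INR (S m))). pose proof (Hnn x (xs n)). lra. }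
    pose proof (Rmin_pos e (/ INR (S m)) He (inv_pos_nat m)). lra. }
  destruct (H3 f) as [dl [Hdl HL]].
  { intro x. pose proof (Fpos x). lra. }
  { exists 1. split; [lra|]. intros y z _ _. apply Rabs_le.
    pose proof (FL y z). pose proof (FL z y). rewrite (Hsym z y) in *. lra. }
  destruct (Hcb (Rmin dl db) ltac:(apply Rmin_pos; lra)) as [N [Ninf Nch]].
  destruct (Ninf 0%nat) as [j0 [_ Nj0]].
  destruct (HL (xs j0)) as [K [HK HK2]].
  destruct (Hb (xs j0)) as [r Hr].
  destruct (arch (/ f (xs j0) + K * r)) as [m Hm].
  destruct (Ninf m) as [n [Hmn Nn]].
  specialize (Nch j0 n Nj0 Nn).
  assert (A1 : S_inf d (xs j0) dl (xs n)) by (eapply chain_mono; [apply Rmin_l|exact Nch]).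
  assert (A2 : S_inf d (xs j0) db (xs n)) by (eapply chain_mono; [apply Rmin_r|exact Nch]).
  specialize (HK2 _ _ A1 (chain_refl d dl (xs j0))).
  specialize (Hr _ _ A2 (chain_refl d db (xs j0))).
  assert (Kr : K * d (xs n) (xs j0) <= K * r) by (apply Rmult_le_compat_l; lra).
  pose proof (Rle_abs (/ f (xs n) - / f (xs j0))).
  assert (Hfn : f (xs n) <= / INR (S n)).
  { specialize (F1 (xs n) n). assert (d (xs n) (xs n) = 0) by (apply H0; auto). lra. }
  assert (Hinv : / / INR (S n) <= / f (xs n)) by (apply Rinv_le_contravar; auto).
  rewrite Rinv_inv in Hinv.
  apply le_INR in Hmn. rewrite S_INR in Hinv. lra.
Qed.

Theorem mainTheorem4 (X : Type) (d : X -> X -> R) (Hd : is_metric d) :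
  (cofinally_Bourbaki_quasi_complete d <->
     (strongly_uniformly_locally_bounded d /\
      forall f : X -> R, (forall x, f x <> 0) ->
        strongly_uniformly_locally_lipschitz d f ->
        strongly_uniformly_locally_lipschitz d (fun x => / f x)))
  /\
  (cofinally_Bourbaki_quasi_complete d <->
     (strongly_uniformly_locally_bounded d /\
      forall f : X -> R, (forall x, f x <> 0) ->
        lipschitz d f ->
        strongly_uniformly_locally_lipschitz d (fun x => / f x))).
Proof.
  split; split.
  - intro Hc. split; [apply partA; auto|]. apply partB; auto.
  - intros [Hb H2]. apply partD; auto. intros f Hf Hl. apply H2; auto. apply partC; auto.
  - intro Hc. split; [apply partA; auto|]. intros f Hf Hl. apply partB; auto. apply partC; auto.
  - intros [Hb H3]. apply partD; auto.
Qed.
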